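(* Let $\Box$ be an axis-parallel square of side length $1/2$ in $\mathbb{R}^2$, let $l$ be the line containing its top edge, and let $H$ be the open halfplane above $l$. Let $A$ be a finite set of points in $\Box$, and let $\xi(A)$ be the boundary of the closure of $H\setminus\bigcup_{a\in A}\odot_a$. Then $\xi(A)$ is an $x$-monotone curve whose leftmost and rightmost pieces are horizontal rays and each other piece is a portion of the boundary circle of $\odot_a$ for some $a\in A$ (said to be contributed by $a$), and: (1) if $\sigma,\sigma'$ are pieces of $\xi(A)$ contributed by $a$ and $a'$ respectively, then $\sigma$ lies to the left of $\sigma'$ on $\xi(A)$ iff $a$ lies to the left of $a'$; (2) for each $a\in A$ at most one piece of $\xi(A)$ is contributed by $a$, so $\xi(A)$ has $O(|A|)$ pieces.
   Context: $\odot_a$ denotes the closed disk of radius 1 centered at $a$. A piece is a maximal portion of the curve lying on a single circle (or ray). *)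

(* Defs.v *)
(* R : realType, points of the plane are R * R
   (product topology = Euclidean topology). *)
From HB Require Import structures.
From mathcomp Require Import all_boot all_order all_algebra.
From mathcomp Require Import all_classical all_reals all_analysis.
Set Implicit Arguments. Unset Strict Implicit. Unset Printing Implicit Defensive.
Import Order.TTheory GRing.Theory Num.Theory.
Import numFieldNormedType.Exports.
Local Open Scope classical_set_scope.
Local Open Scope ring_scope.

Definition odot {R : realType} (a : R * R) : set (R * R) :=
  [set p | (p.1 - a.1) ^+ 2 + (p.2 - a.2) ^+ 2 <= 1].

Definition on_circle {R : realType} (a p : R * R) : Prop :=
  (p.1 - a.1) ^+ 2 + (p.2 - a.2) ^+ 2 = 1.

Definition square {R : realType} (x0 y0 : R) : set (R * R) :=
  [set p | x0 <= p.1 <= x0 + 2^-1 /\ y0 <= p.2 <= y0 + 2^-1].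

Definition halfplane_above {R : realType} (y0 : R) : set (R * R) :=
  [set p | y0 + 2^-1 < p.2].

Definition boundary {T : topologicalType} (S : set T) : set T :=
  closure S `\` interior S.

Definition xi {R : realType} (y0 : R) (A : set (R * R)) : set (R * R) :=
  boundary (closure (halfplane_above y0 `\` \bigcup_(a in A) odot a)).

(* Main.v *)
Require Import Defs.
From HB Require Import structures.
From mathcomp Require Import all_boot all_order all_algebra.
From mathcomp Require Import all_classical all_reals all_analysis.
From mathcomp Require Import ring lra.
Import Order.TTheory GRing.Theory Num.Theory.
Import numFieldNormedType.Exports.
Local Open Scope classical_set_scope.
Local Open Scope ring_scope.
Section Alg.
Context {R : realType}.
Definition psi (u : R) := Num.sqrt (1 - u ^+ 2).

Lemma psi_ge0 u : 0 <= psi u.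
Proof. exact: sqrtr_ge0. Qed.

Lemma psi_sq u : u ^+ 2 <= 1 -> psi u ^+ 2 = 1 - u ^+ 2.
Proof. by move=> h; rewrite sqr_sqrtr // subr_ge0. Qed.

Lemma psi_sq_ge u : 1 - u ^+ 2 <= psi u ^+ 2.
Proof.
case: (lerP (u ^+ 2) 1) => h; first by rewrite psi_sq.
rewrite /psi ler0_sqrtr; last by lra.
rewrite expr0n /=; lra.
Qed.

Lemma psi_pos u : 0 < psi u -> u ^+ 2 < 1.
Proof. by rewrite /psi sqrtr_gt0 subr_gt0. Qed.

Lemma psi_lt u t : 0 <= t -> psi u < t -> 1 - u ^+ 2 < t ^+ 2.
Proof.
move=> t0 h; have := psi_sq_ge u; have := psi_ge0 u; nra.
Qed.

Lemma psi_lt' u t : 0 < t -> 1 - u ^+ 2 < t ^+ 2 -> psi u < t.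
Proof.
move=> t0 h; case: (lerP (u ^+ 2) 1) => hu.
  have := psi_sq u hu; have := psi_ge0 u; nra.
rewrite /psi ler0_sqrtr; last by lra.
nra.
Qed.

Lemma chord p q r : -1 <= p -> p < q -> q < r -> r <= 1 ->
  psi p * (r - q) + psi r * (q - p) <= psi q * (r - p).
Proof.
move=> p1 pq qr r1.
have hp : p ^+ 2 <= 1 by nra.
have hq : q ^+ 2 <= 1 by nra.
have hr : r ^+ 2 <= 1 by nra.
have := psi_sq p hp; have := psi_sq q hq; have := psi_sq r hr.
have := psi_ge0 p; have := psi_ge0 q; have := psi_ge0 r.
set P := psi p; set Q := psi q; set S := psi r.
move=> S0 Q0 P0 eS eQ eP.
set Y := P * (r - q) + S * (q - p).
have Y0 : 0 <= Y by rewrite /Y; nra.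
have key : Y ^+ 2 <= (Q * (r - p)) ^+ 2.
  have -> : (Q * (r - p)) ^+ 2 = (1 - q ^+ 2) * (r - p) ^+ 2 by rewrite exprMn eQ.
  have id : (1 - q ^+ 2) * (r - p) ^+ 2 - Y ^+ 2 =
     (r - q) * (q - p) * ((p - r) ^+ 2 + (P - S) ^+ 2).
    rewrite /Y.
    apply/eqP; rewrite -subr_eq0; apply/eqP.
    transitivity ((r - q) * (r - p) * (1 - p ^+ 2 - P ^+ 2) + (q - p) * (r - p) * (1 - r ^+ 2 - S ^+ 2)).
      ring.
    rewrite eP eS; ring.
  rewrite -subr_ge0 id.
  apply: mulr_ge0; first by nra.
  by apply: addr_ge0; apply: sqr_ge0.
have QD : 0 <= Q * (r - p) by nra.
nra.
Qed.
End Alg.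
Section Env.
Context {R : realType}.
Variables (x0 y0 : R) (s : seq (R * R)).

Definition L := y0 + 2^-1.
Definition phi (a : R * R) (x : R) := a.2 + psi (x - a.1).
Definition gl (t : seq (R * R)) (x : R) :=
  foldr (fun a m => Num.max (phi a x) m) L t.

Lemma CL (d u v : R) : 0 < d -> u < v -> -1 <= u -> v + d <= 1 ->
  psi u + psi (v + d) <= psi (u + d) + psi v.
Proof.
move=> d0 uv u1 v1.
have : (psi u + psi (v + d)) * (v + d - u) <= (psi (u + d) + psi v) * (v + d - u).
  have e1 : u < u + d by lra.
  have e2 : u + d < v + d by lra.
  have e3 : v < v + d by lra.
  have := chord u (u + d) (v + d) u1 e1 e2 v1; have := chord u v (v + d) u1 uv e3 v1.
  have -> : v + d - (u + d) = v - u by ring.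
  have -> : u + d - u = d by ring.
  have -> : v + d - v = d by ring.
  nra.
move=> h; rewrite -(ler_pM2r (_ : 0 < v + d - u)) //; lra.
Qed.

Lemma psi_cont : continuous (@psi R).
Proof.
move=> x; apply: (@continuous_comp _ _ _ (fun u : R => 1 - u ^+ 2) (@Num.sqrt R)).
  apply: continuousD; first exact: cst_continuous.
  apply: continuousN.
  have -> : (fun u : R => u ^+ 2) = (fun u => u) \* (fun u => u).
    by apply: funext => u; rewrite /= expr2.
  by apply: continuousM; exact: cvg_id.
exact: sqrt_continuous.
Qed.

Lemma phi_cont a : continuous (phi a).
Proof.
move=> x.
have -> : phi a = (fun=> a.2) + (fun y => psi (y - a.1)) by apply: funext.
apply: continuousD; first exact: cst_continuous.
apply: (@continuous_comp _ _ _ (fun u : R => u - a.1) psi); last exact: psi_cont.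
apply: continuousD; first exact: cvg_id.
exact: cst_continuous.
Qed.

Lemma gl_ge_L t x : L <= gl t x.
Proof. elim: t => [|a t IH] /=; first by []. by rewrite le_max IH orbT. Qed.

Lemma gl_ge_phi t x a : a \in t -> phi a x <= gl t x.
Proof.
elim: t => [|b t IH] //=; rewrite in_cons => /orP [/eqP -> | h].
  by rewrite le_max lexx.
by rewrite le_max IH ?orbT.
Qed.

Lemma gl_le t x M : L <= M -> (forall a, a \in t -> phi a x <= M) -> gl t x <= M.
Proof.
move=> LM; elim: t => [|b t IH] //= h.
rewrite ge_max; apply/andP; split; first by apply: h; rewrite mem_head.
by apply: IH => a hat; apply: h; rewrite in_cons hat orbT.
Qed.

Lemma gl_cases t x : gl t x = L \/ exists2 a, a \in t & gl t x = phi a x.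
Proof.
elim: t => [|b t IH] /=; first by left.
case: (lerP (gl t x) (phi b x)) => h.
  right; exists b; first exact: mem_head.
  by [].
case: IH => [->|[a hat ->]]; first by left.
by right; exists a => //; rewrite in_cons hat orbT.
Qed.

Lemma gl_cont t : continuous (gl t).
Proof.
elim: t => [|b t IH] /=; first exact: cst_continuous.
exact: max_fun_continuous (phi_cont b) IH.
Qed.

Lemma lt_psi (t u : R) : 0 <= t -> t < psi u -> t ^+ 2 < 1 - u ^+ 2.
Proof.
move=> t0 h; case: (lerP (u ^+ 2) 1) => hu.
  have := psi_sq u hu; have := psi_ge0 u; nra.
move: h; rewrite /psi ler0_sqrtr; [lra | lra].
Qed.

Lemma lt_psi' (t u : R) : 0 <= t -> t ^+ 2 < 1 - u ^+ 2 -> t < psi u.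
Proof.
move=> t0 h; rewrite ltNge; apply/negP => h2.
have := psi_sq_ge u; have := psi_ge0 u; nra.
Qed.

Hypothesis hsq : forall a, a \in s -> square x0 y0 a.

Lemma sq_bounds {a} : a \in s ->
  [/\ x0 <= a.1, a.1 <= x0 + 2^-1, y0 <= a.2 & a.2 <= L].
Proof. by move/hsq => [/andP [? ?] /andP [? ?]]. Qed.

Definition g := gl s.

Definition winner x a := [/\ a \in s, L < phi a x,
  (forall b, b \in s -> phi b x <= phi a x) &
  (forall b, b \in s -> phi b x = phi a x -> b.1 <= a.1)].

Definition I x := L < g x.

Lemma winner_g {x a} : winner x a -> g x = phi a x.
Proof.
case=> ha hL hb _; apply/le_anti/andP; split; last exact: gl_ge_phi.
by apply: gl_le => //; exact: ltW.
Qed.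

Lemma winner_I {x a} : winner x a -> I x.
Proof. by move=> w; rewrite /I (winner_g w); case: w. Qed.

Lemma lexmax (t : seq (R * R)) x : t != [::] -> exists2 a, a \in t &
  forall b, b \in t -> phi b x < phi a x \/ (phi b x = phi a x /\ b.1 <= a.1).
Proof.
elim: t => [|c t IH] // _.
case: (eqVneq t [::]) => [->|tn].
  exists c; first exact: mem_head.
  by move=> b; rewrite inE => /eqP ->; right.
have [a ha hb] := IH tn.
have ord_ok : forall u v : R * R,
    phi u x < phi v x \/ (phi u x = phi v x /\ u.1 <= v.1) \/
    phi v x < phi u x \/ (phi v x = phi u x /\ v.1 < u.1).
  move=> u v; case: (ltgtP (phi u x) (phi v x)) => h; [by left|by right; right; left|].
  case: (lerP u.1 v.1) => h2; first by right; left.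
  by right; right; right.
case: (ord_ok c a) => [h|[h|[h|[h1 h2]]]].
- exists a; first by rewrite inE ha orbT.
  by move=> b; rewrite inE => /orP [/eqP ->|/hb]; [left|].
- exists a; first by rewrite inE ha orbT.
  by move=> b; rewrite inE => /orP [/eqP ->|/hb]; [right|].
- exists c; first exact: mem_head.
  move=> b; rewrite inE => /orP [/eqP ->|/hb]; first by right.
  case=> [h3|[h3 h4]]; left; [exact: lt_trans h|by rewrite h3].
- exists c; first exact: mem_head.
  move=> b; rewrite inE => /orP [/eqP ->|/hb]; first by right.
  case=> [h3|[h3 h4]]; [by left; rewrite -h1|right; split; first by rewrite h3].
  exact: (le_trans h4 (ltW h2)).
Qed.

Lemma winner_ex {x} : I x -> exists a, winner x a.
Proof.
rewrite /I /g => hI.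
case: (gl_cases s x) => [h|[a0 ha0 e]]; first by rewrite h ltxx in hI.
have sn : s != [::] by move: ha0; case: (s).
have [a ha hb] := lexmax s x sn.
have hba : forall b, b \in s -> phi b x <= phi a x.
  by move=> b /hb [/ltW|[-> _]].
exists a; split => //.
- by apply: (lt_le_trans hI); rewrite e; exact: hba.
- move=> b /hb [h e2|[_ //]]; by rewrite e2 ltxx in h.
Qed.

Lemma pair_eq (a b : R * R) : a.1 = b.1 -> a.2 = b.2 -> a = b.
Proof. by case: a; case: b => ? ? ? ? /= -> ->. Qed.

Lemma winner_uniq {x a b} : winner x a -> winner x b -> a = b.
Proof.
case=> ha _ hab hta; case=> hb _ hba htb.
have e : phi a x = phi b x by apply/le_anti; rewrite hab // hba.
have e1 : a.1 = b.1 by apply/le_anti; rewrite htb // hta.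
apply: pair_eq => //; move: e; rewrite /phi e1; lra.
Qed.

Lemma winner_dom {x a} : winner x a -> (x - a.1) ^+ 2 < 1.
Proof.
case=> ha hL _ _; apply: psi_pos.
have [_ _ _ h] := sq_bounds ha; move: hL; rewrite /phi; lra.
Qed.

Lemma winner_mono {x x' a a'} : x < x' -> winner x a -> winner x' a' -> a.1 <= a'.1.
Proof.
move=> xx' w w'; rewrite leNgt; apply/negP => h.
have d1 := winner_dom w; have d2 := winner_dom w'.
case: w => ha _ hb _; case: w' => ha' _ hb' ht'.
have h1 := hb a' ha'.
have h2 : phi a x' < phi a' x'.
  rewrite lt_neqAle hb' // andbT; apply/eqP => e.
  by have := ht' a ha e; rewrite leNgt h.
have u1 : -1 <= x - a.1 by nra.
have v1 : (x' - a.1) + (a.1 - a'.1) <= 1 by nra.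
have hd : 0 < a.1 - a'.1 by lra.
have huv : x - a.1 < x' - a.1 by lra.
have := CL _ _ _ hd huv u1 v1.
have -> : x - a.1 + (a.1 - a'.1) = x - a'.1 by ring.
have -> : x' - a.1 + (a.1 - a'.1) = x' - a'.1 by ring.
move: h1 h2; rewrite /phi; lra.
Qed.

Lemma near_pos {f : R -> R} {x : R} : {for x, continuous f} -> 0 < f x ->
  \forall y \near x, 0 < f y.
Proof.
move=> cf fx; have H : \forall y \near x, `|f x - f y| < f x.
  by apply: (@cvgr_dist_lt _ R^o _ (nbhs x)) => //; exact: nbhs_filter.
apply: filterS H => y /=; rewrite ltr_norml; lra.
Qed.

Lemma nearT (P : R -> Prop) (x : R) : (forall y, P y) -> \forall y \near x, P y.
Proof. by move=> h; apply: filterE. Qed.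

Lemma near_all_seq (T : eqType) (t : seq T) (Q : T -> R -> Prop) (x : R) :
  (forall b, b \in t -> \forall y \near x, Q b y) ->
  \forall y \near x, forall b, b \in t -> Q b y.
Proof.
elim: t => [|c t IH] H; first by apply: nearT => y b.
have h1 := H c (mem_head c t).
have h2 : \forall y \near x, forall b, b \in t -> Q b y.
  by apply: IH => b hb; apply: H; rewrite inE hb orbT.
apply: filterS (filterI h1 h2) => y [q1 q2] b; rewrite inE => /orP [/eqP ->|]//.
exact: q2.
Qed.

Lemma near_ball {P : R -> Prop} {x : R} : (\forall y \near x, P y) ->
  exists2 e : R, 0 < e & forall y, `|x - y| < e -> P y.
Proof.
move/nbhs_normP => [e /= e0 he]; exists e => // y hy; exact: he.
Qed.

Lemma phi_diff_cont a b x : {for x, continuous (fun y => phi a y - phi b y)}.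
Proof.
have -> : (fun y => phi a y - phi b y) = phi a + (fun y => - phi b y) by [].
apply: continuousD; first exact: phi_cont.
apply: continuousN; exact: phi_cont.
Qed.

Lemma winner_right {x a} : winner x a ->
  exists2 e : R, 0 < e & forall y, x <= y -> y < x + e -> winner y a.
Proof.
move=> w; have d1 := winner_dom w.
case: w => ha hL hb ht.
pose Q b y := a.1 <= b.1 -> b != a -> phi b y < phi a y.
have hQ : \forall y \near x, forall b, b \in s -> Q b y.
  apply: near_all_seq => b hbs.
  case: (lerP a.1 b.1) => h1; last by apply: nearT => y; rewrite /Q leNgt h1.
  case: (eqVneq b a) => [->|hne]; first by apply: nearT => y _; rewrite eqxx.
  have lt1 : phi b x < phi a x.
    rewrite lt_neqAle hb // andbT; apply/eqP => e.
    have := ht b hbs e => h2.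
    have e1 : b.1 = a.1 by apply/le_anti; rewrite h1 h2.
    move/eqP: hne; apply; apply: pair_eq => //.
    by move: e; rewrite /phi e1; lra.
  have := near_pos (phi_diff_cont a b x) (_ : 0 < phi a x - phi b x).
  move=> /(_ ltac:(lra)); apply: filterS => y hy _ _; lra.
have hL2 : \forall y \near x, 0 < phi a y - L.
  apply: near_pos; last by lra.
  have -> : (fun y => phi a y - L) = phi a + (fun=> - L) by [].
  apply: continuousD; [exact: phi_cont|exact: cst_continuous].
have hQL : \forall y \near x, (forall b, b \in s -> Q b y) /\ 0 < phi a y - L.
  by apply: filterS (filterI hQ hL2) => y [].
have [e e0 he] := near_ball hQL.
exists e => // y xy ye.
have [hQy hLy] : (forall b, b \in s -> Q b y) /\ 0 < phi a y - L.
  by apply: he; rewrite distrC ger0_norm; lra.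
have hby : forall b, b \in s -> phi b y <= phi a y.
  move=> b hbs; case: (lerP a.1 b.1) => h1.
    case: (eqVneq b a) => [->//|hne]; exact/ltW/hQy.
  case: (eqVneq x y) => [<-|xy']; first exact: hb.
  have xy2 : x < y by rewrite lt_neqAle xy' xy.
  have [_ _ _ hb2] := sq_bounds hbs.
  case: (lerP 1 ((y - b.1) ^+ 2)) => hd.
    have -> : phi b y = b.2.
      by rewrite /phi /psi ler0_sqrtr ?addr0 //; lra.
    lra.
  have u1 : -1 <= x - a.1 by nra.
  have v1 : (y - a.1) + (a.1 - b.1) <= 1 by nra.
  have hd' : 0 < a.1 - b.1 by lra.
  have huv : x - a.1 < y - a.1 by lra.
  have := CL _ _ _ hd' huv u1 v1.
  have -> : x - a.1 + (a.1 - b.1) = x - b.1 by ring.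
  have -> : y - a.1 + (a.1 - b.1) = y - b.1 by ring.
  have := hb b hbs; rewrite /phi; lra.
split => //; first by lra.
move=> b hbs e1; case: (lerP b.1 a.1) => // h1.
case: (eqVneq b a) => [eba|hne]; first by rewrite eba ltxx in h1.
have := hQy b hbs (ltW h1) hne; rewrite e1 ltxx //.
Qed.

Lemma I_bounds {x} : I x -> x0 - 1 < x /\ x < x0 + 2.
Proof.
move/winner_ex => [a w]; have d := winner_dom w.
case: w => ha _ _ _; have [h1 h2 _ _] := sq_bounds ha.
split; nra.
Qed.

Lemma phiL {a w} : a \in s -> L < phi a w -> (w - a.1) ^+ 2 < 1 - (L - a.2) ^+ 2.
Proof.
move=> ha h; have [_ _ _ h2] := sq_bounds ha.
have := @lt_psi (L - a.2) (w - a.1) (_ : 0 <= L - a.2); rewrite /phi in h.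
move=> /(_ ltac:(lra) ltac:(lra)); lra.
Qed.

Lemma phiL' {a w} : a \in s -> (w - a.1) ^+ 2 < 1 - (L - a.2) ^+ 2 -> L < phi a w.
Proof.
move=> ha h; have [_ _ _ h2] := sq_bounds ha.
have := @lt_psi' (L - a.2) (w - a.1) (_ : 0 <= L - a.2) (_ : (L - a.2) ^+ 2 < 1 - (w - a.1) ^+ 2).
rewrite /phi; move=> /(_ ltac:(lra) ltac:(lra)); lra.
Qed.

Lemma phi_x0 {a} : a \in s -> L < phi a x0.
Proof.
move=> ha; apply: phiL' => //; have [h1 h2 h3 h4] := sq_bounds ha.
have hL : L - a.2 <= 2^-1 by rewrite /L; lra.
have h5 : 0 <= L - a.2 by lra.
have : (x0 - a.1) ^+ 2 <= 2^-1 * 2^-1 by nra.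
have : (L - a.2) ^+ 2 <= 2^-1 * 2^-1 by nra.
have -> : (2^-1 : R) * 2^-1 = 4^-1 by rewrite -invfM; congr (_^-1); lra.
have : (4^-1 : R) = 1/4 by rewrite mul1r.
lra.
Qed.

Lemma sq_between (z x m c r : R) : z <= x -> x <= m ->
  (z - c) ^+ 2 < r -> (m - c) ^+ 2 < r -> (x - c) ^+ 2 < r.
Proof.
move=> zx xm h1 h2; case: (lerP x c) => h.
  have : (x - c) ^+ 2 <= (z - c) ^+ 2 by nra.
  lra.
have : (x - c) ^+ 2 <= (m - c) ^+ 2 by nra.
lra.
Qed.

Lemma I_phi {x a} : a \in s -> L < phi a x -> I x.
Proof. by move=> ha h; apply: (lt_le_trans h); exact: gl_ge_phi. Qed.

Lemma I_convex z x y : z < x -> x < y -> I z -> I y -> I x.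
Proof.
move=> zx xy /winner_ex [a wa] /winner_ex [b wb].
case: wa => ha hLa _ _; case: wb => hb hLb _ _.
case: (lerP x x0) => hx.
  apply: (I_phi ha); apply: (phiL' ha).
  apply: (@sq_between z x x0 a.1 _ (ltW zx) hx); [exact: phiL ha hLa | exact: phiL ha (phi_x0 ha)].
apply: (I_phi hb); apply: (phiL' hb).
apply: (@sq_between x0 x y b.1 _ (ltW hx) (ltW xy)); [exact: phiL hb (phi_x0 hb) | exact: phiL hb hLb].
Qed.

Lemma g_cont : continuous g.
Proof. exact: gl_cont. Qed.

Lemma I_open {x} : I x -> exists2 e : R, 0 < e & forall y, `|x - y| < e -> I y.
Proof.
move=> hx; rewrite /I in hx; apply: near_ball.
have cf : {for x, continuous (fun y => g y - L)}.
  have -> : (fun y => g y - L) = g + (fun=> - L) by [].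
  apply: continuousD; [exact: g_cont|exact: cst_continuous].
have hp : 0 < g x - L by lra.
have := near_pos cf hp.
by apply: filterS => y /=; rewrite /I; lra.
Qed.

Lemma notI_g x : ~ I x -> g x = L.
Proof.
move=> h; apply/le_anti; rewrite gl_ge_L andbT.
by rewrite leNgt; apply/negP.
Qed.

Hypothesis hs0 : s != [::].

Definition contrib a := exists x, winner x a.
Definition C := [seq a <- s | `[< contrib a >]].
Definition K := sort <=%O (undup (map fst C)).
Definition k := size K.
Definition c (i : nat) := nth (0, 0) C (find (fun a : R * R => a.1 == nth 0 K i) C).

Lemma K_sorted : sorted <%O K.
Proof. by rewrite /K sort_lt_sorted undup_uniq. Qed.

Lemma K_lt {i j} : (i < j)%N -> (j < k)%N -> nth 0 K i < nth 0 K j.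
Proof.
move=> ij jk.
apply: (sorted_ltn_nth lt_trans 0 K_sorted) => //; rewrite inE.
  exact: ltn_trans ij jk.
Qed.

Lemma K_iff {i j} : (i < k)%N -> (j < k)%N -> (i < j)%N <-> nth 0 K i < nth 0 K j.
Proof.
move=> ik jk; split; first by move=> ij; exact: K_lt.
move=> h; case: (ltngtP i j) => // h2.
  by have := K_lt h2 ik; rewrite ltNge (ltW h).
by move: h; rewrite h2 ltxx.
Qed.

Lemma memK r : r \in K -> exists a, [/\ a \in C, contrib a & r = a.1].
Proof.
rewrite /K mem_sort mem_undup => /mapP [a ha ->]; exists a; split => //.
by move: ha; rewrite mem_filter => /andP [/asboolP].
Qed.

Lemma contrib_s {a} : contrib a -> a \in s.
Proof. by case=> x []. Qed.

Lemma contrib_K {a} : contrib a -> a.1 \in K.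
Proof.
move=> h; rewrite /K mem_sort mem_undup; apply/mapP; exists a => //.
by rewrite mem_filter (contrib_s h) andbT; apply/asboolP.
Qed.

Lemma c_spec {i} : (i < k)%N -> [/\ contrib (c i), c i \in s & (c i).1 = nth 0 K i].
Proof.
move=> ik; have : nth 0 K i \in K by exact: mem_nth.
move=> /memK [a [haC hca e]].
have hh : has (fun a : R * R => a.1 == nth 0 K i) C by apply/hasP; exists a => //; rewrite e.
have := nth_find (0, 0) hh; rewrite -/(c i) => /eqP e2.
have hc : c i \in C by rewrite /c; apply: mem_nth; rewrite -has_find.
move: hc; rewrite mem_filter => /andP [/asboolP hc1 hc2]; split => //.
Qed.

Lemma contrib_key a b : contrib a -> contrib b -> a.1 = b.1 -> a = b.
Proof.
move=> [x wa] [y wb] e.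
case: wa => ha _ hba _; case: wb => hb _ hab _.
apply: pair_eq => //.
case: (ltgtP a.2 b.2) => // h.
  by have := hba b hb; rewrite /phi -e; lra.
by have := hab a ha; rewrite /phi -e; lra.
Qed.

Lemma contrib_idx {a} : contrib a -> exists2 j, (j < k)%N & c j = a.
Proof.
move=> h; have hK := contrib_K h.
exists (index a.1 K); first by rewrite index_mem.
have jk : (index a.1 K < k)%N by rewrite index_mem.
have [h1 _ h3] := c_spec jk.
apply: contrib_key => //; rewrite h3 nth_index //.
Qed.

Lemma winner_idx {x a} : winner x a -> exists2 j, (j < k)%N & c j = a.
Proof. by move=> w; apply: contrib_idx; exists x. Qed.

Lemma k_pos : (0 < k)%N.
Proof.
have : I x0.
  move: hs0; case e: s => [|a t] // _.
  apply: (@I_phi x0 a); first by rewrite e mem_head.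
  by apply: phi_x0; rewrite e mem_head.
move=> /winner_ex [a w].
have [j jk _] := winner_idx w.
exact: leq_ltn_trans (leq0n j) jk.
Qed.

Lemma I_x0 : I x0.
Proof.
move: hs0; case e: s => [|a t] // _.
apply: (@I_phi x0 a); first by rewrite e mem_head.
by apply: phi_x0; rewrite e mem_head.
Qed.

Definition alpha := inf I.
Definition Sl (i : nat) := [set x | exists a, winner x a /\ ((k <= i)%N \/ a.1 < nth 0 K i)].
Definition Tl (i : nat) := [set alpha] `|` Sl i.
Definition xs (i : nat) := sup (Tl i).

Lemma I_ne : I !=set0.
Proof. by exists x0; exact: I_x0. Qed.

Lemma I_lb : has_lbound I.
Proof. by exists (x0 - 1) => y /I_bounds [h _]; exact: ltW. Qed.

Lemma alpha_le {x} : I x -> alpha <= x.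
Proof. by move=> hx; exact: (ge_inf I_lb hx). Qed.

Lemma lt_alpha {x} : alpha < x -> exists2 z, I z & z < x.
Proof. by move=> h; exact: inf_lt I_ne h. Qed.

Lemma T_sup i : has_sup (Tl i).
Proof.
split; first by exists alpha; left.
exists (x0 + 2) => y [->|[a [w _]]].
  have := alpha_le I_x0; lra.
by have [_ h] := I_bounds (winner_I w); exact: ltW.
Qed.

Lemma xs_ub i y : Tl i y -> y <= xs i.
Proof. by move=> h; exact: (sup_upper_bound (T_sup i)). Qed.

Lemma xs_le i M : (forall y, Tl i y -> y <= M) -> xs i <= M.
Proof. by move=> h; apply: ge_sup; [exists alpha; left|exact: h]. Qed.

Lemma xs_gt {i x} : x < xs i -> exists2 y, Tl i y & x < y.
Proof. by move=> h; apply: sup_gt h; exists alpha; left. Qed.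

Lemma alpha_xs i : alpha <= xs i.
Proof. by apply: xs_ub; left. Qed.

Lemma P_left x : x <= xs 0 -> g x = L.
Proof.
move=> hx; apply: notI_g => hI.
have [e e0 he] := I_open hI.
have hy : I (x - e / 2) by apply: he; rewrite opprB addrC subrK ger0_norm; lra.
have := alpha_le hy.
have : xs 0 <= alpha.
  apply: xs_le => y [->//|[a [w [|h]]]].
    by rewrite leqn0 => /eqP k0; have := k_pos; rewrite k0.
  have [j jk cj] := winner_idx w.
  have [_ _ e1] := c_spec jk; move: h; rewrite -cj e1.
  by move/(K_iff jk k_pos).
lra.
Qed.

Lemma P_right x : xs k <= x -> g x = L.
Proof.
move=> hx; apply: notI_g => hI.
have [e e0 he] := I_open hI.
have hy : I (x + e / 2) by apply: he; rewrite opprD addrA subrr sub0r normrN ger0_norm; lra.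
have [a w] := winner_ex hy.
have : x + e / 2 <= xs k by apply: xs_ub; right; exists a; split => //; left.
lra.
Qed.

Lemma P_lt {i} : (i < k)%N -> xs i < xs i.+1.
Proof.
move=> ik; have [[z wz] hs _] := c_spec ik.
have h1 : xs i <= z.
  apply: xs_le => y [->|[a [w [|h]]]].
  - exact: alpha_le (winner_I wz).
  - by rewrite leqNgt ik.
  - rewrite leNgt; apply/negP => zy.
    have := winner_mono zy wz w.
    have [_ _ e1] := c_spec ik; rewrite e1; lra.
have [e e0 he] := winner_right wz.
have w2 : winner (z + e / 2) (c i) by apply: he; lra.
have : z + e / 2 <= xs i.+1.
  apply: xs_ub; right; exists (c i); split => //.
  case: (leqP k i.+1) => h; first by left.
  right; have [_ _ ->] := c_spec ik; exact: K_lt.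
lra.
Qed.

Lemma P_mid {i x} : (i < k)%N -> xs i < x -> x < xs i.+1 -> winner x (c i).
Proof.
move=> ik h1 h2.
have [y hy xy] := xs_gt h2.
case: hy => [ey|[b [wb hb]]].
  by rewrite ey in xy; have := alpha_xs i; lra.
have hIx : I x.
  have [z hz zx] := lt_alpha (le_lt_trans (alpha_xs i) h1).
  exact: I_convex zx xy hz (winner_I wb).
have [a w] := winner_ex hIx.
have [j jk cj] := winner_idx w.
have [_ _ ej] := c_spec jk.
have [_ _ ei] := c_spec ik.
suff ji : j = i by rewrite -ji cj.
apply/eqP; rewrite eqn_leq; apply/andP; split.
  case: hb => hb.
    by rewrite -ltnS; exact: leq_trans jk hb.
  case: (leqP k i.+1) => hk; first by rewrite -ltnS; exact: leq_trans jk hk.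
  have := winner_mono xy w wb; rewrite -cj ej => h3.
  have : nth 0 K j < nth 0 K i.+1 by exact: le_lt_trans h3 hb.
  by move/(K_iff jk hk).
rewrite leqNgt; apply/negP => ji.
have : x <= xs i.
  apply: xs_ub; right; exists a; split => //; right.
  by rewrite -cj ej; apply/(K_iff jk ik).
lra.
Qed.

Lemma cl_pt (f : R -> R) e : continuous f ->
  (forall eps, 0 < eps -> exists y, `|e - y| < eps /\ f y = 0) -> f e = 0.
Proof.
move=> cf h; case: (ltgtP (f e) 0) => // hf.
  have := @near_pos (fun y => - f y) e (continuousN (cf e)) (_ : 0 < - f e).
  move=> /(_ ltac:(lra)) /near_ball [eps e0 he].
  have [y [hy fy]] := h eps e0; have := he y hy; rewrite fy; lra.
have := near_pos (cf e) hf.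
move=> /near_ball [eps e0 he].
have [y [hy fy]] := h eps e0; have := he y hy; rewrite fy; lra.
Qed.

Lemma cl_zero (f : R -> R) p q : continuous f -> p < q ->
  (forall x, p < x -> x < q -> f x = 0) -> forall x, p <= x -> x <= q -> f x = 0.
Proof.
move=> cf pq h x px xq.
case: (ltgtP p x) px => // px _; last first.
  rewrite -px; apply: cl_pt => // eps e0.
  pose m := Num.min eps (q - p).
  have m1 : m <= eps by rewrite ge_min lexx.
  have m2 : m <= q - p by rewrite ge_min lexx orbT.
  have m0 : 0 < m by rewrite lt_min e0 subr_gt0 pq.
  exists (p + m / 2); split; last by apply: h; lra.
  by rewrite opprD addrA subrr sub0r normrN ger0_norm; lra.
case: (ltgtP x q) xq => // xq _; first exact: h.
rewrite xq; apply: cl_pt => // eps e0.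
pose m := Num.min eps (q - p).
have m1 : m <= eps by rewrite ge_min lexx.
have m2 : m <= q - p by rewrite ge_min lexx orbT.
have m0 : 0 < m by rewrite lt_min e0 subr_gt0 pq.
exists (q - m / 2); split; last by apply: h; lra.
by rewrite opprB addrC subrK ger0_norm; lra.
Qed.

Lemma circ_cont (a : R * R) : continuous (fun x : R => (x - a.1) ^+ 2 + (g x - a.2) ^+ 2 - 1).
Proof.
move=> x.
have e : (fun x => (x - a.1) ^+ 2 + (g x - a.2) ^+ 2 - 1) =
  ((fun y => y - a.1) \* (fun y => y - a.1)) + ((fun y => g y - a.2) \* (fun y => g y - a.2))
  + (fun=> - 1).
  by apply: funext => y /=; rewrite !expr2.
have c1 : {for x, continuous (fun y : R => y - a.1)}.
  apply: continuousD; [exact: cvg_id|exact: cst_continuous].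
have c2 : {for x, continuous (fun y : R => g y - a.2)}.
  apply: continuousD; [exact: g_cont|exact: cst_continuous].
rewrite e; apply: continuousD; last exact: cst_continuous.
by apply: continuousD; apply: continuousM.
Qed.

Lemma winner_circ {x a} : winner x a -> on_circle a (x, g x).
Proof.
move=> w; rewrite /on_circle /= (winner_g w).
case: w => ha hL _ _; have [_ _ _ h] := sq_bounds ha.
have hp : 0 < psi (x - a.1) by move: hL; rewrite /phi; lra.
have := psi_sq (x - a.1) (ltW (psi_pos _ hp)).
rewrite /phi; have -> : a.2 + psi (x - a.1) - a.2 = psi (x - a.1) by ring.
move=> ->; ring.
Qed.

Lemma P_closed i x : (i < k)%N -> xs i <= x -> x <= xs i.+1 -> on_circle (c i) (x, g x).
Proof.
move=> ik h1 h2; rewrite /on_circle /=; apply/eqP; rewrite -subr_eq0; apply/eqP.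
have H := @cl_zero _ (xs i) (xs i.+1) (circ_cont (c i)) (P_lt ik).
apply: (H _ x h1 h2) => y y1 y2 /=.
have := winner_circ (P_mid ik y1 y2); rewrite /on_circle /= => ->; ring.
Qed.

Definition Sset := [set p : R * R | g p.1 < p.2].
Definition Kset := [set p : R * R | g p.1 <= p.2].

Lemma HU_eq {A : set (R * R)} : (forall a, A a <-> a \in s) ->
  halfplane_above y0 `\` \bigcup_(a in A) odot a = Sset.
Proof.
move=> hA; apply/seteqP; split => p.
  rewrite /halfplane_above /= => -[hH hU].
  case: (gl_cases s p.1) => [e|[a ha e]]; rewrite /Sset /g /= e //.
  have [_ _ _ h2] := sq_bounds ha.
  have nin : ~ odot a p by move=> hp; apply: hU; exists a => //; exact/hA.
  have h3 : 1 < (p.1 - a.1) ^+ 2 + (p.2 - a.2) ^+ 2.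
    by rewrite ltNge; apply/negP => h; apply: nin.
  have := psi_lt' (p.1 - a.1) (p.2 - a.2) (_ : 0 < p.2 - a.2) (_ : 1 - (p.1 - a.1) ^+ 2 < (p.2 - a.2) ^+ 2).
  rewrite /phi /L in h2 *; move=> /(_ ltac:(lra) ltac:(lra)); lra.
rewrite /Sset /= => hp; split.
  by rewrite /halfplane_above /=; have := gl_ge_L s p.1; rewrite /g in hp; rewrite /L in hp *; lra.
move=> [a /hA ha hin]; have [_ _ _ h2] := sq_bounds ha.
have h1 : phi a p.1 < p.2 by apply: le_lt_trans hp; exact: gl_ge_phi.
have hL := gl_ge_L s p.1.
have := psi_lt (p.1 - a.1) (p.2 - a.2) (_ : 0 <= p.2 - a.2) (_ : psi (p.1 - a.1) < p.2 - a.2).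
move: hin; rewrite /odot /=; rewrite /phi in h1; rewrite /g /L in hp hL h2 *.
move=> hin /(_ ltac:(lra) ltac:(lra)); lra.
Qed.

Lemma nbhs_prod_intro (p : R * R) (U V : set R) (B : set (R * R)) :
  nbhs p.1 U -> nbhs p.2 V -> (forall q : R * R, U q.1 -> V q.2 -> B q) -> nbhs p B.
Proof.
move=> hU hV h; exists (U, V) => //= -[x y] [/= hx hy]; exact: h.
Qed.

Lemma nbhs_prod_elim {p : R * R} {B : set (R * R)} : nbhs p B ->
  exists U V : set R, [/\ nbhs p.1 U, nbhs p.2 V & forall q : R * R, U q.1 -> V q.2 -> B q].
Proof.
case=> -[U V] [/= hU hV] hUV; exists U, V; split => // q hq1 hq2.
by apply: hUV; split.
Qed.

Lemma nbhs_up_down {y : R} {V : set R} : nbhs y V ->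
  exists2 t : R, 0 < t & V (y + t) /\ V (y - t).
Proof.
move/near_ball => [e e0 he]; exists (e / 2); first lra.
split; apply: he.
  by rewrite opprD addrA subrr sub0r normrN ger0_norm; lra.
by rewrite opprB addrC subrK ger0_norm; lra.
Qed.

Lemma gcont_near (x r : R) : r < g x -> \forall y \near x, r < g y.
Proof.
move=> h.
have cf : {for x, continuous (fun y => g y - r)}.
  have -> : (fun y => g y - r) = g + (fun=> - r) by [].
  apply: continuousD; [exact: g_cont|exact: cst_continuous].
have := near_pos cf (_ : 0 < g x - r); move=> /(_ ltac:(lra)).
by apply: filterS => y /=; lra.
Qed.

Lemma gcont_near' (x r : R) : g x < r -> \forall y \near x, g y < r.
Proof.
move=> h.
have cf : {for x, continuous (fun y => r - g y)}.
  have -> : (fun y => r - g y) = (fun=> r) + (fun y => - g y) by [].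
  apply: continuousD; [exact: cst_continuous|apply: continuousN; exact: g_cont].
have := near_pos cf (_ : 0 < r - g x); move=> /(_ ltac:(lra)).
by apply: filterS => y /=; lra.
Qed.

Lemma id_near_lt (x r : R) : x < r -> \forall y \near x, y < r.
Proof.
move=> h.
have cf : {for x, continuous (fun y : R => r - y)}.
  have -> : (fun y : R => r - y) = (fun=> r) + (fun y => - y) by [].
  apply: continuousD; [exact: cst_continuous|apply: continuousN; exact: cvg_id].
have := near_pos cf (_ : 0 < r - x); move=> /(_ ltac:(lra)).
by apply: filterS => y /=; lra.
Qed.

Lemma id_near_gt (x r : R) : r < x -> \forall y \near x, r < y.
Proof.
move=> h.
have cf : {for x, continuous (fun y : R => y - r)}.
  have -> : (fun y : R => y - r) = (fun y => y) + (fun=> - r) by [].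
  apply: continuousD; [exact: cvg_id|exact: cst_continuous].
have := near_pos cf (_ : 0 < x - r); move=> /(_ ltac:(lra)).
by apply: filterS => y /=; lra.
Qed.

Lemma below_nbhs {p : R * R} : p.2 < g p.1 ->
  nbhs p [set q : R * R | q.2 < g q.1].
Proof.
move=> h; pose d := g p.1 - p.2.
apply: (@nbhs_prod_intro p [set x | g p.1 - d / 2 < g x] [set y | y < p.2 + d / 2]).
- by apply: gcont_near; rewrite /d; lra.
- by apply: id_near_lt; rewrite /d; lra.
by move=> q /= h1 h2; rewrite /d in h1 h2; lra.
Qed.

Lemma above_nbhs {p : R * R} : g p.1 < p.2 ->
  nbhs p [set q : R * R | g q.1 < q.2].
Proof.
move=> h; pose d := p.2 - g p.1.
apply: (@nbhs_prod_intro p [set x | g x < g p.1 + d / 2] [set y | p.2 - d / 2 < y]).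
- by apply: gcont_near'; rewrite /d; lra.
- by apply: id_near_gt; rewrite /d; lra.
by move=> q /= h1 h2; rewrite /d in h1 h2; lra.
Qed.

Lemma closure_sub (E : set (R * R)) : E `<=` Kset -> closure E `<=` Kset.
Proof.
move=> hE p hp; rewrite /Kset /=; rewrite leNgt; apply/negP => h.
have [q [qE qB]] := hp _ (below_nbhs h).
have := hE q qE; rewrite /Kset /= => h2; move: qB => /= qB; lra.
Qed.

Lemma cl_S : closure Sset = Kset.
Proof.
apply/seteqP; split; first by apply: closure_sub => p /=; exact: ltW.
move=> p hp B /nbhs_prod_elim [U [V [hU hV hUV]]].
have [t t0 [ht _]] := nbhs_up_down hV.
exists (p.1, p.2 + t); split; last by apply: hUV => //=; exact: nbhs_singleton.
rewrite /Sset /=; rewrite /Kset /= in hp; lra.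
Qed.

Lemma cl_K : closure Kset = Kset.
Proof.
apply/seteqP; split; first exact: closure_sub.
exact: subset_closure.
Qed.

Lemma int_K : interior Kset = Sset.
Proof.
apply/seteqP; split.
  move=> p /nbhs_prod_elim [U [V [hU hV hUV]]].
  have [t t0 [_ ht]] := nbhs_up_down hV.
  have := hUV (p.1, p.2 - t) (nbhs_singleton hU) ht; rewrite /Kset /Sset /=; lra.
move=> p hp; apply: filterS (above_nbhs hp) => q /=; exact: ltW.
Qed.

Lemma xi_eq (A : set (R * R)) : (forall a, A a <-> a \in s) ->
  xi y0 A = [set p | p.2 = g p.1].
Proof.
move=> hA; rewrite /xi (HU_eq hA) cl_S /boundary cl_K int_K.
apply/seteqP; split => p /=.
  by rewrite /Kset /Sset /= => -[h1 h2]; apply/eqP; rewrite eq_le h1 andbT leNgt; apply/negP.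
by rewrite /Kset /Sset /= => ->; split; [exact: lexx|rewrite ltxx].
Qed.

Lemma main :
  exists (k : nat) (xs : nat -> R) (c : nat -> R * R) (f : R -> R),
    [/\ continuous f /\ xi y0 [set` s] = [set p | p.2 = f p.1],
        (0 < k)%N /\ (forall i, (i < k)%N -> xs i < xs i.+1),
        (forall x, x <= xs 0%N -> f x = y0 + 2^-1) /\
        (forall x, xs k <= x -> f x = y0 + 2^-1),
        (forall i, (i < k)%N -> [set` s] (c i) /\
           (forall x, xs i <= x <= xs i.+1 -> on_circle (c i) (x, f x)))
      & [/\ (forall i, (i.+1 < k)%N -> c i <> c i.+1),
            (forall i j, (i < k)%N -> (j < k)%N ->
               ((i < j)%N <-> (c i).1 < (c j).1))
          & (forall i j, (i < k)%N -> (j < k)%N -> c i = c j -> i = j)]].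
Proof.
exists k, xs, c, g; split.
- by split; [exact: g_cont|apply: xi_eq].
- by split; [exact: k_pos|move=> i ik; exact: P_lt].
- by split; [exact: P_left|exact: P_right].
- move=> i ik; have [_ hs _] := c_spec ik; split => // x /andP [h1 h2].
  exact: P_closed.
split.
- move=> i ik e.
  have ik' : (i < k)%N by exact: ltn_trans (ltnSn i) ik.
  have [_ _ e1] := c_spec ik; have [_ _ e2] := c_spec ik'.
  have := K_lt (ltnSn i) ik; rewrite -e1 -e2 e ltxx //.
- move=> i j ik jk; have [_ _ e1] := c_spec ik; have [_ _ e2] := c_spec jk.
  by rewrite e1 e2; exact: K_iff.
- move=> i j ik jk e; have [_ _ e1] := c_spec ik; have [_ _ e2] := c_spec jk.
  case: (ltngtP i j) => // h.
    by have := (K_iff ik jk).1 h; rewrite -e1 -e2 e ltxx.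
  by have := (K_iff jk ik).1 h; rewrite -e1 -e2 e ltxx.
Qed.

End Env.

Theorem fact3 (R : realType) (x0 y0 : R) (A : set (R * R)) :
  finite_set A -> A !=set0 -> A `<=` square x0 y0 ->
  exists (k : nat) (xs : nat -> R) (c : nat -> R * R) (f : R -> R),
    [/\ continuous f /\ xi y0 A = [set p | p.2 = f p.1],
        (0 < k)%N /\ (forall i, (i < k)%N -> xs i < xs i.+1),
        (forall x, x <= xs 0%N -> f x = y0 + 2^-1) /\
        (forall x, xs k <= x -> f x = y0 + 2^-1),
        (forall i, (i < k)%N -> A (c i) /\
           (forall x, xs i <= x <= xs i.+1 -> on_circle (c i) (x, f x)))
      & [/\ (forall i, (i.+1 < k)%N -> c i <> c i.+1),
            (forall i j, (i < k)%N -> (j < k)%N ->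
               ((i < j)%N <-> (c i).1 < (c j).1))
          & (forall i j, (i < k)%N -> (j < k)%N -> c i = c j -> i = j)]].
Proof.
move=> /finite_seqP [s ->] [a0 h0] hsq.
have hs0 : s != [::] by move: h0; case: (s).
exact: (@main R x0 y0 s hsq hs0).
Qed.
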